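(* Let $\mathcal{S}_1,\dots,\mathcal{S}_L$ be finitely many finite subsets of $\mathbb{C}$, each having non-zero coordinate product distance. For $\theta\in[0,2\pi]$ and $x=(x^1,\dots,x^6)\in\mathbb{C}^6$, let $X'_\theta(x)$ be the $3\times 4$ matrix $$X'_\theta(x)=\begin{bmatrix} x^{1R}+jx^{3I} & -x^{2R}+jx^{4I} & e^{j\theta}(x^{5R}+jx^{6I}) & e^{j\theta}(-x^{3R}+jx^{1I})\\ x^{2R}+jx^{4I} & x^{1R}-jx^{3I} & e^{j\theta}(x^{4R}+jx^{2I}) & e^{j\theta}(x^{5R}-jx^{6I})\\ e^{j\theta}(x^{6R}+jx^{5I}) & e^{j\theta}(-x^{6R}+jx^{5I}) & x^{3R}+jx^{1I} & -x^{4R}+jx^{2I} \end{bmatrix}.$$ Then there exists $\theta\in[0,2\pi]$ such that for every $\ell\in\{1,\dots,L\}$ and every two distinct tuples $x\neq y$ in $\mathcal{S}_\ell^6$, the difference matrix $X'_\theta(x)-X'_\theta(y)$ has rank $3$.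
   Context: For a complex number $a$, $a^R$ and $a^I$ denote its real and imaginary parts, and $j=\sqrt{-1}$. The coordinate product distance (CPD) between two distinct points $u,v$ of a finite set $\mathcal{S}\subset\mathbb{C}$ is $|u^R-v^R|\,|u^I-v^I|$; the CPD of $\mathcal{S}$ is the minimum of this quantity over all pairs of distinct points of $\mathcal{S}$. (So non-zero CPD means any two distinct points differ in both real and imaginary parts.) *)

(* Defs.v *)
From Stdlib Require Import Reals List.
Open Scope R_scope.

Definition Cx : Type := (R * R)%type.
Definition Re (a : Cx) : R := fst a.
Definition Im (a : Cx) : R := snd a.
Definition C0 : Cx := (0, 0).
Definition Cadd (a b : Cx) : Cx := (Re a + Re b, Im a + Im b).
Definition Csub (a b : Cx) : Cx := (Re a - Re b, Im a - Im b).
Definition Cmul (a b : Cx) : Cx :=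
  (Re a * Re b - Im a * Im b, Re a * Im b + Im a * Re b).
Definition Cexpj (t : R) : Cx := (cos t, sin t).

Definition cpd2 (u v : Cx) : R := Rabs (Re u - Re v) * Rabs (Im u - Im v).

Definition nonzero_cpd (S : list Cx) : Prop :=
  forall u v, In u S -> In v S -> u <> v -> cpd2 u v <> 0.

(* The matrix X'_theta(x), for x = (x^1,...,x^6) given as x : nat -> Cx
   (indices 1..6 used); rows indexed 0..2, columns 0..3. *)
Definition Xp (t : R) (x : nat -> Cx) (i k : nat) : Cx :=
  let e := Cexpj t in
  let r (a : nat) := Re (x a) in
  let m (a : nat) := Im (x a) in
  match i, k with
  | O, O => (r 1%nat, m 3%nat)
  | 0, 1 => (- r 2%nat, m 4%nat)
  | 0, 2 => Cmul e (r 5%nat, m 6%nat)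
  | 0, 3 => Cmul e (- r 3%nat, m 1%nat)
  | 1, 0 => (r 2%nat, m 4%nat)
  | 1, 1 => (r 1%nat, - m 3%nat)
  | 1, 2 => Cmul e (r 4%nat, m 2%nat)
  | 1, 3 => Cmul e (r 5%nat, - m 6%nat)
  | 2, 0 => Cmul e (r 6%nat, m 5%nat)
  | 2, 1 => Cmul e (- r 6%nat, m 5%nat)
  | 2, 2 => (r 3%nat, m 1%nat)
  | 2, 3 => (- r 4%nat, m 2%nat)
  | _, _ => C0
  end.

Definition rank3_3x4 (M : nat -> nat -> Cx) : Prop :=
  forall c : nat -> Cx,
    (forall k, (k < 4)%nat ->
       Cadd (Cadd (Cmul (c 0%nat) (M 0%nat k)) (Cmul (c 1%nat) (M 1%nat k)))
            (Cmul (c 2%nat) (M 2%nat k)) = C0) ->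
    forall i, (i < 3)%nat -> c i = C0.

Definition tuple6_in (S : list Cx) (x : nat -> Cx) : Prop :=
  forall a, (1 <= a <= 6)%nat -> In (x a) S.

Definition tuple6_neq (x y : nat -> Cx) : Prop :=
  exists a, (1 <= a <= 6)%nat /\ x a <> y a.

(* Main.v *)
Require Import Defs.
From Stdlib Require Import Reals List Lia Lra Classical.
From Coquelicot Require Import Complex.
Require Import Defs.
Open Scope R_scope.

Definition dp (x y : nat -> Cx) a : R := Re (x a) - Re (y a).
Definition dq (x y : nat -> Cx) a : R := Im (x a) - Im (y a).
Section Q.
Variables (x y : nat -> Cx).
Definition Z1 : C := (dp x y 1, dq x y 3).
Definition Z2 : C := (dp x y 2, dq x y 4).
Definition V : C := (dp x y 3, dq x y 1).
Definition S' : C := (- dp x y 4, dq x y 2).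
Definition W1 : C := (dp x y 5, dq x y 6).
Definition W2 : C := (dp x y 4, dq x y 2).
Definition T1 : C := (- dp x y 3, dq x y 1).
Definition T2 : C := (dp x y 5, - dq x y 6).
Definition U1 : C := (dp x y 6, dq x y 5).
Definition U2 : C := (- dp x y 6, dq x y 5).
End Q.
Definition ee (t : R) : C := (cos t, sin t).

Ltac fin := match goal with H : ?a = 0 |- ?b = 0 =>
   assert (b = a) as -> by ring; exact H end.

Lemma col_eqs t x y (c : nat -> Cx) :
  (forall k, (k < 4)%nat ->
       Cadd (Cadd (Cmul (c 0%nat) (Csub (Xp t x 0 k) (Xp t y 0 k))) (Cmul (c 1%nat) (Csub (Xp t x 1 k) (Xp t y 1 k))))
            (Cmul (c 2%nat) (Csub (Xp t x 2 k) (Xp t y 2 k))) = C0) ->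
  (c 0%nat * Z1 x y + c 1%nat * Z2 x y + c 2%nat * (ee t * U1 x y) = RtoC 0 /\
   c 0%nat * (- Cconj (Z2 x y)) + c 1%nat * Cconj (Z1 x y) + c 2%nat * (ee t * U2 x y) = RtoC 0 /\
   c 0%nat * (ee t * W1 x y) + c 1%nat * (ee t * W2 x y) + c 2%nat * V x y = RtoC 0 /\
   c 0%nat * (ee t * T1 x y) + c 1%nat * (ee t * T2 x y) + c 2%nat * S' x y = RtoC 0)%C.
Proof.
  intros H.
  pose proof (H 0%nat ltac:(lia)) as H0.
  pose proof (H 1%nat ltac:(lia)) as H1.
  pose proof (H 2%nat ltac:(lia)) as H2.
  pose proof (H 3%nat ltac:(lia)) as H3.
  clear H.
  unfold Xp, Cadd, Csub, Cmul, Cexpj, C0, Re, Im in H0, H1, H2, H3; simpl in H0, H1, H2, H3.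
  unfold Z1, Z2, U1, U2, W1, W2, V, S', T1, T2, ee, Cconj, RtoC, Cplus, Cmult, Copp, Cminus, dp, dq, Re, Im.
  destruct (c 0%nat) as [a0 b0], (c 1%nat) as [a1 b1], (c 2%nat) as [a2 b2].
  simpl in *.
  injection H0 as H0a H0b; injection H1 as H1a H1b; injection H2 as H2a H2b; injection H3 as H3a H3b.
  repeat split; apply injective_projections; simpl.
  all: unfold Re, Im in *.
  all: unfold Defs.Re, Defs.Im in *; fin.
Qed.
Definition Good (Q : R -> Prop) : Prop :=
  forall a b, 0 <= a < b -> b <= PI / 2 ->
  exists a' b', a <= a' /\ a' < b' /\ b' <= b /\ forall t, a' < t < b' -> Q t.

Lemma Good_true (Q : R -> Prop) : (forall t, 0 < t < PI / 2 -> Q t) -> Good Q.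
Proof.
  intros H a b Ha Hb. exists a, b. repeat split; try lra.
  intros t Ht. apply H. lra.
Qed.

Lemma Good_mono (P Q : R -> Prop) : (forall t, P t -> Q t) -> Good P -> Good Q.
Proof.
  intros H G a b Ha Hb. destruct (G a b Ha Hb) as (a' & b' & H1 & H2 & H3 & H4).
  exists a', b'. repeat split; auto.
Qed.

Lemma Good_and (P Q : R -> Prop) : Good P -> Good Q -> Good (fun t => P t /\ Q t).
Proof.
  intros GP GQ a b Ha Hb. destruct (GP a b Ha Hb) as (a' & b' & H1 & H2 & H3 & H4).
  destruct (GQ a' b') as (a'' & b'' & K1 & K2 & K3 & K4); try lra.
  exists a'', b''. repeat split; try lra.
  - apply H4; lra.
  - apply K4; lra.
Qed.

Lemma Good_list {A : Type} (l : list A) (Q : A -> R -> Prop) :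
  (forall z, In z l -> Good (Q z)) -> Good (fun t => forall z, In z l -> Q z t).
Proof.
  induction l as [|h l IH]; intros H.
  - apply Good_true. intros t _ z [].
  - apply (Good_mono (fun t => Q h t /\ (forall z, In z l -> Q z t))).
    + intros t [H1 H2] z [<-|Hz]; auto.
    + apply Good_and.
      * apply H. left. auto.
      * apply IH. intros z Hz. apply H. right. auto.
Qed.

Lemma Good_one (Q : R -> Prop) :
  (forall t1 t2, 0 < t1 < PI / 2 -> 0 < t2 < PI / 2 -> ~ Q t1 -> ~ Q t2 -> t1 = t2) ->
  Good Q.
Proof.
  intros H a b Ha Hb.
  destruct (classic (exists t0, a < t0 < b /\ ~ Q t0)) as [[t0 [Ht0 Hn]]|Hno].
  - exists a, t0. repeat split; try lra.
    intros t Ht. apply NNPP. intro Hq.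
    assert (t = t0) by (apply H; auto; lra). lra.
  - exists a, b. repeat split; try lra.
    intros t Ht. apply NNPP. intro Hq. apply Hno. exists t. auto.
Qed.

Open Scope C_scope.
Lemma Cint (a b : C) : a * b = RtoC 0 -> b <> RtoC 0 -> a = RtoC 0.
Proof. intros H Hb. replace a with (a*b/b) by (field; auto). rewrite H. field. auto. Qed.

Lemma Cmul_nz (a b : C) : a <> RtoC 0 -> b <> RtoC 0 -> a * b <> RtoC 0.
Proof. intros Ha Hb H. apply Ha. exact (Cint a b H Hb). Qed.
Lemma core (e z1 z2 u1 u2 w1 w2 v c0 c1 c2 : C) :
  z1 * Cconj z1 + z2 * Cconj z2 <> RtoC 0 ->
  v * (z1 * Cconj z1 + z2 * Cconj z2) - e * e *
    ((Cconj z1 * u1 - z2 * u2) * w1 + (Cconj z2 * u1 + z1 * u2) * w2) <> RtoC 0 ->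
  c0 * z1 + c1 * z2 + c2 * (e * u1) = RtoC 0 ->
  c0 * (- Cconj z2) + c1 * Cconj z1 + c2 * (e * u2) = RtoC 0 ->
  c0 * (e * w1) + c1 * (e * w2) + c2 * v = RtoC 0 ->
  c0 = RtoC 0 /\ c1 = RtoC 0 /\ c2 = RtoC 0.
Proof.
  intros HN HX E0 E1 E2.
  assert (H2 : c2 = RtoC 0).
  { refine (Cint _ _ _ HX).
    transitivity ((z1 * Cconj z1 + z2 * Cconj z2) * (c0 * (e * w1) + c1 * (e * w2) + c2 * v)
       - e * w1 * (Cconj z1 * (c0 * z1 + c1 * z2 + c2 * (e * u1)) - z2 * (c0 * (- Cconj z2) + c1 * Cconj z1 + c2 * (e * u2)))
       - e * w2 * (Cconj z2 * (c0 * z1 + c1 * z2 + c2 * (e * u1)) + z1 * (c0 * (- Cconj z2) + c1 * Cconj z1 + c2 * (e * u2)))).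
    - ring.
    - rewrite E0, E1, E2. ring. }
  subst c2.
  assert (H0 : c0 = RtoC 0).
  { refine (Cint _ _ _ HN).
    transitivity (Cconj z1 * (c0 * z1 + c1 * z2 + RtoC 0 * (e * u1)) - z2 * (c0 * (- Cconj z2) + c1 * Cconj z1 + RtoC 0 * (e * u2))).
    - ring.
    - rewrite E0, E1. ring. }
  assert (H1 : c1 = RtoC 0).
  { refine (Cint _ _ _ HN).
    transitivity (Cconj z2 * (c0 * z1 + c1 * z2 + RtoC 0 * (e * u1)) + z1 * (c0 * (- Cconj z2) + c1 * Cconj z1 + RtoC 0 * (e * u2))).
    - ring.
    - rewrite E0, E1. ring. }
  auto.
Qed.
Close Scope C_scope.

Lemma ee_nz t : ee t <> RtoC 0.
Proof.
  intro H. unfold ee, RtoC in H. injection H as H1 H2.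
  pose proof (sin2_cos2 t) as E. unfold Rsqr in E. rewrite H1, H2 in E. lra.
Qed.

Lemma ee_sq_inj t1 t2 : 0 < t1 < PI / 2 -> 0 < t2 < PI / 2 ->
  (ee t1 * ee t1 = ee t2 * ee t2)%C -> t1 = t2.
Proof.
  intros H1 H2 E. unfold ee, Cmult in E. simpl in E. injection E as E1 E2.
  rewrite <- !cos_2a in E1.
  destruct (Rtotal_order t1 t2) as [L|[L|L]]; auto.
  - assert (cos (2 * t2) < cos (2 * t1)) by (apply cos_decreasing_1; lra). lra.
  - assert (cos (2 * t1) < cos (2 * t2)) by (apply cos_decreasing_1; lra). lra.
Qed.

Lemma sq_cancel (A B e1 e2 : C) : A <> RtoC 0 ->
  (A - e1 * e1 * B = RtoC 0)%C -> (A - e2 * e2 * B = RtoC 0)%C -> (e1 * e1 = e2 * e2)%C.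
Proof.
  intros HA H1 H2.
  assert (HB : B <> RtoC 0).
  { intro HB. subst B. apply HA. rewrite <- H1. ring. }
  assert (E : ((e1 * e1 - e2 * e2) * B = RtoC 0)%C).
  { transitivity ((A - e2 * e2 * B) - (A - e1 * e1 * B))%C; [ring|].
    rewrite H1, H2. ring. }
  pose proof (Cint _ _ E HB) as E'.
  transitivity ((e1 * e1 - e2 * e2) + e2 * e2)%C; [ring|]. rewrite E'. ring.
Qed.

Definition Mx t x y := fun i k => Csub (Xp t x i k) (Xp t y i k).

Definition NN x y : C := (Z1 x y * Cconj (Z1 x y) + Z2 x y * Cconj (Z2 x y))%C.
Definition KK x y (w1 w2 : C) : C :=
  ((Cconj (Z1 x y) * U1 x y - Z2 x y * U2 x y) * w1 + (Cconj (Z2 x y) * U1 x y + Z1 x y * U2 x y) * w2)%C.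

Lemma rank_from (c : nat -> Cx) :
  c 0%nat = RtoC 0 -> c 1%nat = RtoC 0 -> c 2%nat = RtoC 0 ->
  forall i, (i < 3)%nat -> c i = C0.
Proof.
  intros H0 H1 H2 i Hi. destruct i as [|[|[|i]]]; auto; lia.
Qed.

Lemma rankA t x y : NN x y <> RtoC 0 ->
  (V x y * NN x y - ee t * ee t * KK x y (W1 x y) (W2 x y))%C <> RtoC 0 ->
  rank3_3x4 (Mx t x y).
Proof.
  intros HN HX c Hc.
  destruct (col_eqs t x y c Hc) as (E0 & E1 & E2 & E3).
  destruct (core _ _ _ _ _ _ _ _ _ _ _ HN HX E0 E1 E2) as (K0 & K1 & K2).
  apply rank_from; auto.
Qed.

Lemma rankA' t x y : NN x y <> RtoC 0 ->
  (S' x y * NN x y - ee t * ee t * KK x y (T1 x y) (T2 x y))%C <> RtoC 0 ->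
  rank3_3x4 (Mx t x y).
Proof.
  intros HN HX c Hc.
  destruct (col_eqs t x y c Hc) as (E0 & E1 & E2 & E3).
  destruct (core _ _ _ _ _ _ _ _ _ _ _ HN HX E0 E1 E3) as (K0 & K1 & K2).
  apply rank_from; auto.
Qed.

Lemma pair_nz (a b : R) : a <> 0 \/ b <> 0 -> ((a, b) : C) <> RtoC 0.
Proof. intros [H|H] E; unfold RtoC in E; injection E; intros; auto. Qed.

Lemma pair_z (a b : R) : a = 0 -> b = 0 -> ((a, b) : C) = RtoC 0.
Proof. intros -> ->. reflexivity. Qed.

Lemma rankB t x y :
  dp x y 1 = 0 -> dq x y 1 = 0 -> dp x y 2 = 0 -> dq x y 2 = 0 ->
  dp x y 3 = 0 -> dq x y 3 = 0 -> dp x y 4 = 0 -> dq x y 4 = 0 ->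
  (dp x y 5 <> 0 /\ dq x y 5 <> 0) \/ (dp x y 6 <> 0 /\ dq x y 6 <> 0) ->
  rank3_3x4 (Mx t x y).
Proof.
  intros p1 q1 p2 q2 p3 q3 p4 q4 H56 c Hc.
  destruct (col_eqs t x y c Hc) as (E0 & E1 & E2 & E3).
  assert (Z1 x y = RtoC 0) as Ez1 by (apply pair_z; auto).
  assert (Z2 x y = RtoC 0) as Ez2 by (apply pair_z; auto).
  assert (V x y = RtoC 0) as Ev by (apply pair_z; auto).
  assert (S' x y = RtoC 0) as Es by (apply pair_z; [rewrite p4; ring | auto]).
  assert (W2 x y = RtoC 0) as Ew2 by (apply pair_z; auto).
  assert (T1 x y = RtoC 0) as Et1 by (apply pair_z; [rewrite p3; ring | auto]).
  assert (HW1 : W1 x y <> RtoC 0) by (apply pair_nz; unfold W1; tauto).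
  assert (HT2 : T2 x y <> RtoC 0).
  { apply pair_nz. destruct H56 as [[A B]|[A B]]; [left; auto | right; intro C'; apply B; lra]. }
  assert (HU1 : U1 x y <> RtoC 0) by (apply pair_nz; tauto).
  pose proof (ee_nz t) as He.
  rewrite Ez1, Ez2, Ev, Es, Ew2, Et1 in *.
  assert (K0 : c 0%nat = RtoC 0).
  { apply (Cint _ (ee t * W1 x y)%C); [|apply Cmul_nz; auto].
    rewrite <- E2. ring. }
  assert (K1 : c 1%nat = RtoC 0).
  { apply (Cint _ (ee t * T2 x y)%C); [|apply Cmul_nz; auto].
    rewrite <- E3. ring. }
  assert (K2 : c 2%nat = RtoC 0).
  { apply (Cint _ (ee t * U1 x y)%C); [|apply Cmul_nz; auto].
    rewrite <- E0. ring. }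
  apply rank_from; auto.
Qed.

Lemma valid S x y a : nonzero_cpd S -> In (x a) S -> In (y a) S ->
  (dp x y a = 0 /\ dq x y a = 0) \/ (dp x y a <> 0 /\ dq x y a <> 0).
Proof.
  intros HS Hx Hy. destruct (classic (x a = y a)) as [E|E].
  - left. unfold dp, dq. rewrite E. split; ring.
  - right. pose proof (HS _ _ Hx Hy E) as H. unfold cpd2 in H.
    split; intro Z; apply H; unfold dp, dq in Z; rewrite Z, Rabs_R0; ring.
Qed.

Lemma neq_ex S x y : nonzero_cpd S -> tuple6_in S x -> tuple6_in S y -> tuple6_neq x y ->
  exists a, (1 <= a <= 6)%nat /\ dp x y a <> 0 /\ dq x y a <> 0.
Proof.
  intros HS Hx Hy [a [Ha E]]. exists a. split; auto.
  destruct (valid S x y a HS (Hx a Ha) (Hy a Ha)) as [[A B]|[A B]]; auto.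
  exfalso. apply E. destruct (x a) as [r1 i1] eqn:X1, (y a) as [r2 i2] eqn:Y1.
  unfold dp, dq, Re, Im in A, B. rewrite X1, Y1 in A, B. simpl in A, B. f_equal; lra.
Qed.

Lemma good_rank S x y : nonzero_cpd S -> tuple6_in S x -> tuple6_in S y -> tuple6_neq x y ->
  Good (fun t => rank3_3x4 (Mx t x y)).
Proof.
  intros HS Hx Hy Hn.
  destruct (neq_ex S x y HS Hx Hy Hn) as (a0 & Ha0 & P0 & Q0).
  assert (Va : forall a, (1 <= a <= 6)%nat ->
     (dp x y a = 0 /\ dq x y a = 0) \/ (dp x y a <> 0 /\ dq x y a <> 0)).
  { intros a Ha. apply (valid S); auto. }
  pose proof (Va 1%nat ltac:(lia)) as V1.
  pose proof (Va 2%nat ltac:(lia)) as V2.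
  pose proof (Va 3%nat ltac:(lia)) as V3.
  pose proof (Va 4%nat ltac:(lia)) as V4.
  pose proof (Va 5%nat ltac:(lia)) as V5.
  pose proof (Va 6%nat ltac:(lia)) as V6.
  destruct (classic (dp x y 1 <> 0 \/ dq x y 3 <> 0 \/ dp x y 2 <> 0 \/ dq x y 4 <> 0)) as [HA|HB].
  - assert (HN : NN x y <> RtoC 0).
    { intro E. assert (F : fst (NN x y) = dp x y 1 * dp x y 1 + dq x y 3 * dq x y 3
          + dp x y 2 * dp x y 2 + dq x y 4 * dq x y 4)
        by (unfold NN, Z1, Z2, Cconj, Cmult, Cplus; simpl; ring).
      rewrite E in F. simpl in F.
      destruct HA as [H|[H|[H|H]]];
      match type of H with ?u <> 0 => assert (u * u > 0) by (apply Rsqr_pos_lt in H; unfold Rsqr in H; lra) end;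
      pose proof (Rle_0_sqr (dp x y 1)); pose proof (Rle_0_sqr (dp x y 2));
      pose proof (Rle_0_sqr (dq x y 3)); pose proof (Rle_0_sqr (dq x y 4)); unfold Rsqr in *; lra. }
    assert (HVS : V x y <> RtoC 0 \/ S' x y <> RtoC 0).
    { destruct HA as [H|[H|[H|H]]].
      - left. apply pair_nz. right. tauto.
      - left. apply pair_nz. left. tauto.
      - right. apply pair_nz. right. tauto.
      - right. apply pair_nz. left. intro Z. destruct V4 as [[A B]|[A B]]; [tauto|]. apply A. lra. }
    destruct HVS as [HV|HS'].
    + apply Good_one. intros t1 t2 Ht1 Ht2 Hn1 Hn2. apply ee_sq_inj; auto.
      apply (sq_cancel (V x y * NN x y)%C (KK x y (W1 x y) (W2 x y))).
      * apply Cmul_nz; auto.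
      * apply NNPP. intro Z. apply Hn1. apply rankA; auto.
      * apply NNPP. intro Z. apply Hn2. apply rankA; auto.
    + apply Good_one. intros t1 t2 Ht1 Ht2 Hn1 Hn2. apply ee_sq_inj; auto.
      apply (sq_cancel (S' x y * NN x y)%C (KK x y (T1 x y) (T2 x y))).
      * apply Cmul_nz; auto.
      * apply NNPP. intro Z. apply Hn1. apply rankA'; auto.
      * apply NNPP. intro Z. apply Hn2. apply rankA'; auto.
  - apply Good_true. intros t _.
    assert (p1 : dp x y 1 = 0) by (apply NNPP; tauto).
    assert (q3 : dq x y 3 = 0) by (apply NNPP; tauto).
    assert (p2 : dp x y 2 = 0) by (apply NNPP; tauto).
    assert (q4 : dq x y 4 = 0) by (apply NNPP; tauto).
    assert (q1 : dq x y 1 = 0) by (destruct V1 as [[A B]|[A B]]; tauto).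
    assert (p3 : dp x y 3 = 0) by (destruct V3 as [[A B]|[A B]]; tauto).
    assert (q2 : dq x y 2 = 0) by (destruct V2 as [[A B]|[A B]]; tauto).
    assert (p4 : dp x y 4 = 0) by (destruct V4 as [[A B]|[A B]]; tauto).
    apply rankB; auto.
    destruct a0 as [|[|[|[|[|[|[|a0]]]]]]]; try lia; try tauto.
Qed.

Lemma Xp_ext t x x' i k : (forall a, (1 <= a <= 6)%nat -> x a = x' a) ->
  Xp t x i k = Xp t x' i k.
Proof.
  intros H. unfold Xp.
  rewrite (H 1%nat), (H 2%nat), (H 3%nat), (H 4%nat), (H 5%nat), (H 6%nat) by lia.
  reflexivity.
Qed.

Lemma rank3_ext (M M' : nat -> nat -> Cx) : (forall i k, M i k = M' i k) ->
  rank3_3x4 M -> rank3_3x4 M'.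
Proof.
  intros H HM c Hc. apply HM. intros k Hk. rewrite !H. apply Hc. auto.
Qed.

Definition f6 (a1 a2 a3 a4 a5 a6 : Cx) (n : nat) : Cx :=
  match n with 1 => a1 | 2 => a2 | 3 => a3 | 4 => a4 | 5 => a5 | 6 => a6 | _ => C0 end%nat.

Lemma good_tuple S (HS : nonzero_cpd S) a1 a2 a3 a4 a5 a6 b1 b2 b3 b4 b5 b6 :
  In a1 S -> In a2 S -> In a3 S -> In a4 S -> In a5 S -> In a6 S ->
  In b1 S -> In b2 S -> In b3 S -> In b4 S -> In b5 S -> In b6 S ->
  Good (fun t => forall x y : nat -> Cx,
    x 1%nat = a1 -> x 2%nat = a2 -> x 3%nat = a3 -> x 4%nat = a4 -> x 5%nat = a5 -> x 6%nat = a6 ->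
    y 1%nat = b1 -> y 2%nat = b2 -> y 3%nat = b3 -> y 4%nat = b4 -> y 5%nat = b5 -> y 6%nat = b6 ->
    tuple6_neq x y -> rank3_3x4 (fun i k => Csub (Xp t x i k) (Xp t y i k))).
Proof.
  intros. set (fa := f6 a1 a2 a3 a4 a5 a6). set (fb := f6 b1 b2 b3 b4 b5 b6).
  assert (Ia : tuple6_in S fa).
  { intros a Ha. destruct a as [|[|[|[|[|[|[|a]]]]]]]; try lia; assumption. }
  assert (Ib : tuple6_in S fb).
  { intros a Ha. destruct a as [|[|[|[|[|[|[|a]]]]]]]; try lia; assumption. }
  destruct (classic (tuple6_neq fa fb)) as [Hn|Hn].
  - apply (Good_mono (fun t => rank3_3x4 (Mx t fa fb))).
    + intros t Hr x y X1 X2 X3 X4 X5 X6 Y1 Y2 Y3 Y4 Y5 Y6 _.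
      apply (rank3_ext (Mx t fa fb)); auto.
      intros i k. unfold Mx. f_equal; apply Xp_ext; intros a Ha;
      destruct a as [|[|[|[|[|[|[|a]]]]]]]; try lia; simpl; congruence.
    + apply (good_rank S); auto.
  - apply Good_true. intros t _ x y X1 X2 X3 X4 X5 X6 Y1 Y2 Y3 Y4 Y5 Y6 [a [Ha E]].
    exfalso. apply Hn. exists a. split; auto.
    destruct a as [|[|[|[|[|[|[|a]]]]]]]; try lia; simpl; congruence.
Qed.

Lemma good_S S : nonzero_cpd S ->
  Good (fun t => forall x y : nat -> Cx, tuple6_in S x -> tuple6_in S y -> tuple6_neq x y ->
      rank3_3x4 (fun i k => Csub (Xp t x i k) (Xp t y i k))).
Proof.
  intros HS.
  apply (Good_mono (fun t => forall a1, In a1 S -> forall a2, In a2 S -> forall a3, In a3 S ->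
     forall a4, In a4 S -> forall a5, In a5 S -> forall a6, In a6 S ->
     forall b1, In b1 S -> forall b2, In b2 S -> forall b3, In b3 S ->
     forall b4, In b4 S -> forall b5, In b5 S -> forall b6, In b6 S ->
     forall x y : nat -> Cx,
    x 1%nat = a1 -> x 2%nat = a2 -> x 3%nat = a3 -> x 4%nat = a4 -> x 5%nat = a5 -> x 6%nat = a6 ->
    y 1%nat = b1 -> y 2%nat = b2 -> y 3%nat = b3 -> y 4%nat = b4 -> y 5%nat = b5 -> y 6%nat = b6 ->
    tuple6_neq x y -> rank3_3x4 (fun i k => Csub (Xp t x i k) (Xp t y i k)))).
  - intros t H x y Hx Hy Hn.
    apply (H (x 1%nat) (Hx 1%nat ltac:(lia)) (x 2%nat) (Hx 2%nat ltac:(lia)) (x 3%nat) (Hx 3%nat ltac:(lia))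
             (x 4%nat) (Hx 4%nat ltac:(lia)) (x 5%nat) (Hx 5%nat ltac:(lia)) (x 6%nat) (Hx 6%nat ltac:(lia))
             (y 1%nat) (Hy 1%nat ltac:(lia)) (y 2%nat) (Hy 2%nat ltac:(lia)) (y 3%nat) (Hy 3%nat ltac:(lia))
             (y 4%nat) (Hy 4%nat ltac:(lia)) (y 5%nat) (Hy 5%nat ltac:(lia)) (y 6%nat) (Hy 6%nat ltac:(lia)));
    auto.
  - do 12 (apply Good_list; intros ? ?).
    apply (good_tuple S HS); auto.
Qed.

Theorem lemma1 (Ss : list (list Cx)) :
  (forall S, In S Ss -> nonzero_cpd S) ->
  exists t : R, 0 <= t <= 2 * PI /\
    forall S, In S Ss ->
    forall x y : nat -> Cx, tuple6_in S x -> tuple6_in S y -> tuple6_neq x y ->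
      rank3_3x4 (fun i k => Csub (Xp t x i k) (Xp t y i k)).
Proof.
  intros H.
  assert (G : Good (fun t => forall S, In S Ss ->
    forall x y : nat -> Cx, tuple6_in S x -> tuple6_in S y -> tuple6_neq x y ->
      rank3_3x4 (fun i k => Csub (Xp t x i k) (Xp t y i k)))).
  { apply Good_list. intros S HS. apply good_S. auto. }
  pose proof PI_RGT_0.
  destruct (G 0 (PI / 2)) as (a' & b' & H1 & H2 & H3 & H4); try lra.
  exists ((a' + b') / 2). split; [lra|]. apply H4. lra.
Qed.
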